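(* Let $x$ be an infinite word over a finite alphabet and let $k,\lambda\in\mathbb{N}=\{1,2,3,\dots\}$ be such that $$\underline{d}(\mathrm{AP}(x,k,\lambda)) < \left(1+\left\lfloor\frac{k^2-k}{\lambda^2+\lambda}\right\rfloor\right)^{-1}.$$ Then there is a word $u$ with $|u|\le (k-1)\left\lfloor\frac{k^2-k}{\lambda^2+\lambda}\right\rfloor$ such that $u^\ell$ is a factor of $x$ for every $\ell>0$. In particular, $x$ is not $\omega$-power-free.
   Context: A factor is a contiguous subword; $|u|$ is the length of $u$ and $u^\ell$ is $\ell$ concatenated copies of $u$. A $(k,\lambda)$-anti-power is a word $w=w_1\cdots w_k$ with $|w_1|=\cdots=|w_k|$ such that $|\{i: w_i=w_j\}|\le\lambda$ for each $j\in\{1,\dots,k\}$. $\mathrm{AP}(x,k,\lambda)$ is the set of $m\in\mathbb{N}$ such that the prefix of $x$ of length $km$ is a $(k,\lambda)$-anti-power. The lower density of $S\subseteq\mathbb{N}$ is $\underline{d}(S)=\liminf_{n\to\infty}|S\cap\{1,\dots,n\}|/n$. A word is $\omega$-power-free if for every finite (nonempty) factor $u$ there exists $\ell\in\mathbb{N}$ such that $u^\ell$ is not a factor. *)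

(* Defs.v *)
From HB Require Import structures.
From mathcomp Require Import all_boot all_order all_algebra.
From mathcomp Require Import all_classical all_reals all_analysis.
Set Implicit Arguments. Unset Strict Implicit. Unset Printing Implicit Defensive.
Import Order.TTheory GRing.Theory Num.Theory.

(* An infinite word over the finite alphabet A is a map  x : nat -> A
   (position 0 is the first letter). Finite words are  seq A. *)

Definition prefix (A : Type) (x : nat -> A) (n : nat) : seq A := mkseq x n.

Definition is_factor (A : eqType) (u : seq A) (x : nat -> A) : Prop :=
  exists i : nat, u = mkseq (fun j => x (i + j)) (size u).

Definition wpow (A : Type) (u : seq A) (l : nat) : seq A := flatten (nseq l u).

(* (k,lam)-anti-power: w = w_1 ... w_k with |w_1| = ... = |w_k| (= m) such that
   for each j, #{ i : w_i = w_j } <= lam.  Blocks are indexed from 0. *)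
Definition anti_power (A : eqType) (k lam : nat) (w : seq A) : bool :=
  let m := size w %/ k in
  let blk (i : nat) := take m (drop (i * m) w) in
  [&& 0 < k, k %| size w &
      [forall j : 'I_k, #|[set i : 'I_k | blk i == blk j]| <= lam]].

Definition AP (A : eqType) (x : nat -> A) (k lam : nat) (m : nat) : bool :=
  (0 < m) && anti_power k lam (prefix x (k * m)).

(* |S cap {1..n}| / n, written for n+1 (n >= 0) so that the index starts at 1 *)
Definition density_seq (R : realType) (S : nat -> bool) (n : nat) : R :=
  (count S (iota 1 n.+1))%:R / (n.+1)%:R.

Definition lower_density (R : realType) (S : nat -> bool) : R :=
  limn_inf (density_seq R S).

Definition omega_power_free (A : eqType) (x : nat -> A) : Prop :=
  forall u : seq A, 0 < size u -> is_factor u x ->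
    exists l : nat, 0 < l /\ ~ is_factor (wpow u l) x.

(* Main.v *)
Require Import Defs.
From HB Require Import structures.
From mathcomp Require Import all_boot all_order all_algebra.
From mathcomp Require Import all_classical all_reals all_analysis.
From mathcomp Require Import zify ring lra.
Import Order.TTheory GRing.Theory Num.Theory.
Set Implicit Arguments. Unset Strict Implicit. Unset Printing Implicit Defensive.

Lemma count_iota_mono (S : nat -> bool) a n b l :
  a <= b -> b + l <= a + n -> count S (iota b l) <= count S (iota a n).
Proof.
move=> ab bl.
have -> : n = (b - a) + (l + (n - (b - a) - l)) by lia.
rewrite iotaD count_cat iotaD count_cat.
have -> : a + (b - a) = b by lia.
lia.
Qed.

Lemma count_windows (S : nat -> bool) N M :
  (forall m, M <= m -> has (fun t => S (m + t)) (iota 0 N.+1)) ->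
  forall q, q <= count S (iota M (q * N.+1)).
Proof.
move=> hw; elim=> [|q IH] //.
rewrite mulSn addnC iotaD count_cat.
have : 0 < count S (iota (M + q * N.+1) N.+1).
  rewrite -has_count.
  rewrite -[M + q * N.+1]addn0 iotaDl has_map.
  exact: (hw (M + q * N.+1) (leq_addr _ _)).
lia.
Qed.

Lemma density_runs (R : realType) (S : nat -> bool) (N : nat) :
  (lower_density R S < ((1 + N)%:R)^-1)%R ->
  forall M0, exists m, M0 <= m /\ forall t, t <= N -> ~~ S (m + t).
Proof.
move=> H M0.
case: (pselect (exists m, M0 <= m /\ forall t, t <= N -> ~~ S (m + t))) => // Hn.
exfalso.
set M := M0.+1.
have hw : forall m, M <= m -> has (fun t => S (m + t)) (iota 0 N.+1).
  move=> m Mm; apply/negPn/negP => /hasPn hn; apply: Hn; exists m; split.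
    by apply: leq_trans Mm; rewrite /M.
  by move=> t tN; apply: hn; rewrite mem_iota.
have cw := count_windows hw.
set u := density_seq R S.
have ub : forall n, (0 <= u n <= 1)%R.
  move=> n; rewrite /u /density_seq; apply/andP; split.
    by rewrite divr_ge0.
  rewrite ler_pdivrMr ?ltr0n // mul1r ler_nat.
  by apply: leq_trans (count_size _ _) _; rewrite size_iota.
have bu : bounded_fun u.
  rewrite /= (@ex_bound nat R R^o u (globally setT) (@globally_properfilter nat setT 0%N I)).
  exists 1%R => n _ /=.
  by have /andP[u0 u1] := ub n; rewrite ger0_norm.
have LE := limn_infE bu.
set L := lower_density R S.
set c := (((1 + N)%:R)^-1 : R)%R.
have hLc : (L < c)%R by [].
set r := ((L + c) / 2)%R.
have Lr : (L < r)%R by rewrite /r; lra.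
have rc : (r < c)%R by rewrite /r; lra.
have hinf : forall n, exists m, n <= m /\ (u m < r)%R.
  move=> n.
  have : (infs u n < r)%R.
    apply: le_lt_trans Lr; rewrite /L /lower_density LE.
    apply: ub_le_sup; last by exists n.
    exact: bounded_fun_has_ubound_infs.
  move/inf_lt => [].
    by exists (u n); exists n => /=.
  by move=> y [m /= nm <-] um; exists m.
have cpos : (0 < (1 + N)%:R :> R)%R by rewrite ltr0n.
set d := (1 - r * (1 + N)%:R)%R.
have dpos : (0 < d)%R.
  rewrite /d subr_gt0 -ltr_pdivlMr // div1r //.
have [K HK] : exists K : nat, ((M + N)%:R / d < K%:R :> R)%R.
  exists (Num.bound ((M + N)%:R / d)); apply: archi_boundP.
  by rewrite divr_ge0 // ltW.
have [m [Km um]] := hinf (maxn K M).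
rewrite geq_max in Km; case/andP: Km => Km Mm.
set cnt := count S (iota 1 m.+1).
have hnat : m.+1 <= cnt * N.+1 + (M + N).
  set q := (m.+2 - M) %/ N.+1.
  have h1 : q * N.+1 <= m.+2 - M by apply: leq_trunc_div.
  have h2 : m.+2 - M < q.+1 * N.+1 by apply: ltn_ceil.
  have h3 : q <= cnt.
    apply: leq_trans (cw q) _; apply: count_iota_mono; lia.
  have : q * N.+1 <= cnt * N.+1 by rewrite leq_mul2r h3 orbT.
  lia.
have hR : (m.+1%:R <= cnt%:R * (1 + N)%:R + (M + N)%:R :> R)%R.
  by rewrite -natrM -natrD ler_nat add1n.
have hu : (cnt%:R < r * m.+1%:R :> R)%R.
  by move: um; rewrite /u /density_seq ltr_pdivrMr ?ltr0n.
have hK : ((M + N)%:R < K%:R * d :> R)%R by rewrite -ltr_pdivrMr.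
have hKm : (K%:R <= m.+1%:R :> R)%R by rewrite ler_nat; lia.
have : (cnt%:R * (1 + N)%:R < r * m.+1%:R * (1 + N)%:R :> R)%R.
  by rewrite ltr_pM2r.
have : (K%:R * d <= m.+1%:R * d :> R)%R by rewrite ler_pM2r.
rewrite /d in hK * => h4 h5.
nra.
Qed.

Lemma period_lemma (A : Type) (x : nat -> A) m1 m2 i j :
  m1 < m2 -> i < j -> i * (m2 - m1) <= m1 ->
  (forall t, t < m1 -> x (i * m1 + t) = x (j * m1 + t)) ->
  (forall t, t < m2 -> x (i * m2 + t) = x (j * m2 + t)) ->
  forall y, i * m2 + (j - i) * m1 <= y -> y < i * m2 + (j - i) * m1 + (m1 - i * (m2 - m1)) ->
  x y = x (y + (j - i) * (m2 - m1)).
Proof.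
move=> m12 ij hi h1 h2 y ylo yhi.
set d := j - i in ylo yhi *.
have ej : j = i + d by rewrite /d; lia.
have e2 : i * m2 = i * m1 + i * (m2 - m1) by rewrite -mulnDr; congr (_ * _); lia.
have e3 : d * m2 = d * m1 + d * (m2 - m1) by rewrite -mulnDr; congr (_ * _); lia.
have em : m2 = m1 + (m2 - m1) by lia.
set e := m2 - m1 in hi yhi e2 e3 em *.
clearbody d e.
have [s es] : {s | s = y - d * m1} by exists (y - d * m1).
have hs1 : i * m1 <= s by lia.
have hs2 : s < i * m1 + m1 by lia.
have -> : x y = x s.
  have := h1 (s - i * m1) ltac:(lia).
  rewrite ej mulnDl.
  have -> : i * m1 + (s - i * m1) = s by lia.
  have -> : i * m1 + d * m1 + (s - i * m1) = y by lia.
  by move=> ->.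
have := h2 (s - i * m2) ltac:(lia).
rewrite ej mulnDl.
have -> : i * m2 + (s - i * m2) = s by lia.
have -> : i * m2 + d * m2 + (s - i * m2) = y + d * e by lia.
done.
Qed.

Lemma wpowS (A : Type) (u : seq A) l : wpow u l.+1 = u ++ wpow u l.
Proof. by []. Qed.

Lemma size_wpow (A : Type) (u : seq A) l : size (wpow u l) = l * size u.
Proof. by elim: l => [|l IH] //; rewrite wpowS size_cat IH mulSn. Qed.

Lemma nth_wpow (A : Type) (a : A) (u : seq A) l t : t < l * size u ->
  nth a (wpow u l) t = nth a u (t %% size u).
Proof.
elim: l t => [|l IH] t //; rewrite mulSn wpowS nth_cat => ht.
case: ifP => htu; first by rewrite modn_small.
rewrite IH; last by lia.
have -> : t = (t - size u) + size u by lia.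
by rewrite modnDr addnK.
Qed.

Lemma periodic_nth (A : Type) (x : nat -> A) y0 y1 q :
  (forall y, y0 <= y -> y < y1 -> x y = x (y + q)) -> 0 < q ->
  forall t, t < y1 - y0 + q -> x (y0 + t) = x (y0 + t %% q).
Proof.
move=> hp q0 t; elim: t {-2}t (leqnn t) => [|n IH] t.
  by rewrite leqn0 => /eqP -> _; rewrite mod0n.
move=> tn ht; case: (ltnP t q) => tq; first by rewrite modn_small.
have -> : t = (t - q) + q by lia.
rewrite modnDr -(IH (t - q)); [|lia|lia].
by rewrite addnA -hp //; lia.
Qed.

Lemma factor_of_periodic (A : eqType) (x : nat -> A) y0 y1 q l :
  (forall y, y0 <= y -> y < y1 -> x y = x (y + q)) -> 0 < q ->
  l * q <= y1 - y0 + q ->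
  is_factor (wpow (mkseq (fun t => x (y0 + t)) q) l) x.
Proof.
move=> hp q0 hl; exists y0.
apply: (@eq_from_nth _ (x 0)); first by rewrite size_mkseq.
move=> t ht.
rewrite nth_mkseq //.
move: ht; rewrite size_wpow size_mkseq => ht.
rewrite nth_wpow ?size_mkseq // nth_mkseq ?ltn_pmod //.
symmetry; apply: (periodic_nth hp q0); lia.
Qed.

Lemma factor_mono (A : eqType) (x : nat -> A) (u : seq A) l l' :
  l' <= l -> is_factor (wpow u l) x -> is_factor (wpow u l') x.
Proof.
move=> ll [y0 hy]; exists y0.
case: u hy => [|a u'] hy.
  by rewrite /wpow; elim: (l') => //.
set u := a :: u' in hy *.
apply: (@eq_from_nth _ a); first by rewrite size_mkseq.
move=> t ht.
rewrite nth_mkseq //.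
have ht2 : t < l * size u.
  move: ht; rewrite size_wpow => ht; apply: leq_trans ht _; exact: leq_mul.
rewrite nth_wpow; last by rewrite -size_wpow.
have : nth a (wpow u l) t = x (y0 + t).
  by rewrite hy nth_mkseq // size_wpow.
by rewrite nth_wpow.
Qed.

Lemma pigeon_seq (T : eqType) (Q : T -> nat -> Prop) (cs : seq T) :
  (forall u l l', l' <= l -> Q u l -> Q u l') ->
  (forall l, exists u, u \in cs /\ Q u l) -> exists u, forall l, Q u l.
Proof.
move=> mono; elim: cs => [|c cs IH] H.
  by have [u [] ] := H 0.
case: (pselect (forall l, Q c l)) => [hc|hc]; first by exists c.
move: hc => /existsNP [l0 hl0].
apply: IH => l.
have [u [] ] := H (maxn l l0).
rewrite in_cons => /orP [/eqP -> hq|hu hq].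
  by exfalso; apply: hl0; apply: mono hq; exact: leq_maxr.
by exists u; split => //; apply: mono hq; exact: leq_maxl.
Qed.

Fixpoint words (A : finType) (n : nat) : seq (seq A) :=
  if n is n'.+1 then [seq a :: w | a <- enum A, w <- words A n'] else [:: [::]].

Lemma words_mem (A : finType) (w : seq A) : w \in words A (size w).
Proof.
elim: w => [|a w IH] /=; first by rewrite mem_seq1.
by apply/allpairsP; exists (a, w); rewrite mem_enum.
Qed.

Definition allwords (A : finType) (P : nat) : seq (seq A) :=
  flatten [seq words A p | p <- iota 0 P.+1].

Lemma allwords_mem (A : finType) P (w : seq A) : size w <= P -> w \in allwords A P.
Proof.
move=> hw; apply/flattenP; exists (words A (size w)); last exact: words_mem.
by apply/mapP; exists (size w) => //; rewrite mem_iota.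
Qed.

Definition blk (A : eqType) (x : nat -> A) k m i := take m (drop (i * m) (Defs.prefix x (k * m))).

Lemma blk_nth (A : eqType) (x : nat -> A) k m i t a0 : i < k -> t < m ->
  nth a0 (blk x k m i) t = x (i * m + t).
Proof.
move=> ik tm; rewrite /blk nth_take // nth_drop /Defs.prefix nth_mkseq //.
apply: (@leq_trans (i.+1 * m)); first by rewrite mulSn; lia.
by rewrite leq_mul2r ik orbT.
Qed.

Lemma notAP_class (A : eqType) (x : nat -> A) k lam m : 0 < k -> 0 < m ->
  ~~ AP x k lam m -> exists j : 'I_k, lam < #|[set i : 'I_k | blk x k m i == blk x k m j]|.
Proof.
move=> k0 m0; rewrite /AP m0 /= /anti_power.
have sw : size (Defs.prefix x (k * m)) = k * m by rewrite /Defs.prefix size_mkseq.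
rewrite sw mulKn // k0 dvdn_mulr //=.
by move/forallPn => [j]; rewrite -ltnNge => H; exists j.
Qed.

Lemma pair_count (I : finType) (E : eqType) (b : I -> E) (j : I) lam :
  lam < #|[set i | b i == b j]| ->
  lam * lam.+1 <= #|[set p : I * I | (p.1 != p.2) && (b p.1 == b p.2)]|.
Proof.
set C := [set i | b i == b j] => hC.
set diag := [set (i, i) | i in C].
have hsub : finset.setX C C :\: diag \subset [set p : I * I | (p.1 != p.2) && (b p.1 == b p.2)].
  apply/fintype.subsetP => -[i1 i2]; rewrite !inE /= => /andP [hd /andP [h1 h2]].
  rewrite (eqP h1) (eqP h2) eqxx andbT.
  apply/negP => /eqP e; move: hd; rewrite e; case/negP.
  by rewrite /diag; apply/imsetP; exists i2 => //; rewrite inE.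
apply: leq_trans (subset_leq_card hsub).
rewrite cardsD cardsX.
have -> : finset.setX C C :&: diag = diag.
  apply/finset.setIidPr/fintype.subsetP => p /imsetP [i hi ->]; by rewrite inE /= hi.
rewrite card_imset; last by move=> a1 a2 [].
have : lam.+1 <= #|C| by [].
move: #|C| => c hc.
have : lam.+1 * lam.+1 <= c * c by apply: leq_mul.
nia.
Qed.

Lemma card_offdiag (I : finType) : #|[set p : I * I | p.1 != p.2]| = #|I| * #|I| - #|I|.
Proof.
have -> : [set p : I * I | p.1 != p.2] = ~: [set (i, i) | i : I].
  apply/finset.setP => -[a b]; rewrite !inE /=; apply/idP/idP.
    move=> hab; apply/imsetP => -[i _ [e1 e2]]; move: hab; by rewrite e1 e2 eqxx.
  by apply: contraR => /negPn /eqP ->; apply/imsetP; exists b.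
have := cardsC [set (i, i) | i : I].
rewrite card_imset; last by move=> a1 a2 [].
rewrite card_prod => h; rewrite -h; exact: (esym (addKn _ _)).
Qed.

Lemma pigeon_sets (T I : finType) (F : I -> {set T}) (O : {set T}) :
  (forall i, F i \subset O) -> #|O| < \sum_i #|F i| ->
  exists i1 i2 p, [/\ i1 != i2, p \in F i1 & p \in F i2].
Proof.
move=> hs hlt.
case: (pselect (exists i1 i2 p, [/\ i1 != i2, p \in F i1 & p \in F i2])) => // Hn.
exfalso; move: hlt; apply/negP; rewrite -leqNgt.
have disj : forall i1 i2 p, p \in F i1 -> p \in F i2 -> i1 = i2.
  move=> i1 i2 p h1 h2; apply/eqP; apply/negPn/negP => hne.
  by apply: Hn; exists i1, i2, p.
have E1 : forall B : {set T}, #|B| = \sum_p (p \in B : nat).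
  by move=> B; rewrite -sum1_card big_mkcond; apply: eq_bigr => p _; case: (p \in B).
rewrite (E1 O) (eq_bigr (fun i => \sum_p (p \in F i : nat))); last by move=> i _; exact: E1.
rewrite exchange_big /=; apply: leq_sum => p _.
case: (pselect (exists i, p \in F i)) => [[i0 h0]|hno].
  rewrite (bigD1 i0) //= h0 big1.
    by rewrite (fintype.subsetP (hs i0) _ h0).
  move=> i hi; case: (boolP (p \in F i)) => // h.
  by move: hi; rewrite (disj _ _ _ h h0) eqxx.
rewrite big1 // => i _; case: (boolP (p \in F i)) => // h.
by exfalso; apply: hno; exists i.
Qed.

Lemma core (A : eqType) (x : nat -> A) k lam N m :
  0 < k -> 0 < m -> k * k - k < N.+1 * (lam * lam.+1) ->
  (forall t, t <= N -> ~~ AP x k lam (m + t)) ->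
  exists i j m1 m2, [/\ i < j, j < k, m <= m1, m1 < m2 & m2 <= m + N] /\ (
     (forall t, t < m1 -> x (i * m1 + t) = x (j * m1 + t)) /\
     (forall t, t < m2 -> x (i * m2 + t) = x (j * m2 + t))).
Proof.
move=> k0 m0 hk hn.
pose D := fun (t : 'I_N.+1) => [set p : 'I_k * 'I_k |
   (p.1 != p.2) && (blk x k (m + t) p.1 == blk x k (m + t) p.2)].
have hs : forall t, D t \subset [set p : 'I_k * 'I_k | p.1 != p.2].
  by move=> t; apply/fintype.subsetP => p; rewrite !inE => /andP [].
have hsum : #|[set p : 'I_k * 'I_k | p.1 != p.2]| < \sum_t #|D t|.
  rewrite card_offdiag card_ord; apply: leq_trans hk _.
  have -> : N.+1 * (lam * lam.+1) = \sum_(t < N.+1) lam * lam.+1.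
    by rewrite sum_nat_const card_ord.
  apply: leq_sum => t _.
  have [j hj] := notAP_class k0 (leq_trans m0 (leq_addr _ _)) (hn t (ltn_ord t) ).
  exact: pair_count hj.
have [t1 [t2 [p [hne hp1 hp2]]]] := pigeon_sets hs hsum.
have key : forall (t1 t2 : 'I_N.+1) (a b : 'I_k), t1 < t2 -> a < b ->
    blk x k (m + t1) a == blk x k (m + t1) b ->
    blk x k (m + t2) a == blk x k (m + t2) b ->
  exists i j m1 m2, [/\ i < j, j < k, m <= m1, m1 < m2 & m2 <= m + N] /\ (
     (forall t, t < m1 -> x (i * m1 + t) = x (j * m1 + t)) /\
     (forall t, t < m2 -> x (i * m2 + t) = x (j * m2 + t))).
  move=> s1 s2 a b s12 ab e1 e2.
  exists a, b, (m + s1), (m + s2); split; first split => //.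
  - by rewrite leq_addr.
  - by rewrite ltn_add2l.
  - by rewrite leq_add2l -ltnS.
  split => t ht.
    have := congr1 (fun s => nth (x 0) s t) (eqP e1).
    by rewrite /= !blk_nth.
  have := congr1 (fun s => nth (x 0) s t) (eqP e2).
  by rewrite /= !blk_nth.
move: hp1 hp2; rewrite !inE => /andP [pne e1] /andP [_ e2].
case: (ltngtP t1 t2) => [h12|h21|/val_inj h]; last by rewrite h eqxx in hne.
- case: (ltngtP p.1 p.2) => [ab|ba|/val_inj h]; last by rewrite h eqxx in pne.
  + exact: key h12 ab e1 e2.
  + by apply: key h12 ba _ _; rewrite eq_sym.
- case: (ltngtP p.1 p.2) => [ab|ba|/val_inj h]; last by rewrite h eqxx in pne.
  + exact: key h21 ab e2 e1.
  + by apply: key h21 ba _ _; rewrite eq_sym.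
Qed.

Unset Implicit Arguments.

Theorem corollary3p6 (R : realType) (A : finType) (x : nat -> A) (k lam : nat) :
  0 < k -> 0 < lam ->
  (lower_density R (AP x k lam) <
     ((1 + (k ^ 2 - k) %/ (lam ^ 2 + lam))%:R)^-1)%R ->
  (exists u : seq A,
      [/\ 0 < size u,
          size u <= (k - 1) * ((k ^ 2 - k) %/ (lam ^ 2 + lam)) &
          forall l : nat, 0 < l -> is_factor (wpow u l) x])
  /\ ~ omega_power_free x.
Proof.
move=> k0 l0 H.
have runs := density_runs H.
move: runs; set N := (k ^ 2 - k) %/ (lam ^ 2 + lam) => runs.
have hk : k * k - k < N.+1 * (lam * lam.+1).
  have -> : lam * lam.+1 = lam ^ 2 + lam by rewrite mulnSr.
  rewrite /N; apply: ltn_ceil; by rewrite addn_gt0 l0 orbT.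
set P := (k - 1) * N.
have main : forall l, exists u, u \in allwords A P /\
    (0 < size u /\ size u <= P /\ is_factor (wpow u l) x).
  move=> l.
  have [m [Mm hm]] := runs (l * P + P + 1).
  have m0 : 0 < m by lia.
  have [i [j [m1 [m2 [[ij jk mm1 m12 m2N] [h1 h2]]]]]] := core k0 m0 hk hm.
  have dP : m2 - m1 <= N by lia.
  have jP : j - i <= k - 1 by lia.
  have iP' : i <= k - 1 by lia.
  have qP : (j - i) * (m2 - m1) <= P by apply: leq_mul.
  have iP : i * (m2 - m1) <= P by apply: leq_mul.
  have q0 : 0 < (j - i) * (m2 - m1) by rewrite muln_gt0 !subn_gt0 ij m12.
  have lq : l * ((j - i) * (m2 - m1)) <= l * P by rewrite leq_mul2l qP orbT.
  have hi : i * (m2 - m1) <= m1 by lia.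
  have hper := period_lemma m12 ij hi h1 h2.
  exists (mkseq (fun t => x (i * m2 + (j - i) * m1 + t)) ((j - i) * (m2 - m1))).
  split; first by apply: allwords_mem; rewrite size_mkseq.
  rewrite size_mkseq.
  split => //; split => //.
  apply: factor_of_periodic hper q0 _.
  move: lq iP hi mm1 Mm; clear.
  move: (l * ((j - i) * (m2 - m1))) (l * P) (i * (m2 - m1)) ((j - i) * (m2 - m1)).
  move=> a b c d; lia.
have mono : forall v l1 l2, l2 <= l1 ->
    (0 < size v /\ size v <= P /\ is_factor (wpow v l1) x) ->
    (0 < size v /\ size v <= P /\ is_factor (wpow v l2) x).
  by move=> v l1 l2 h12 [s1 [s2 s3]]; split => //; split => //; apply: factor_mono s3.
have [u hu] := pigeon_seq mono main.
have [s1 [s2 _]] := hu 0.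
split; first by exists u; split => // l _; case: (hu l) => _ [].
move=> hopf.
have hf : is_factor u x by case: (hu 1) => _ [_]; rewrite /wpow /= cats0.
have [l [_ hn]] := hopf u s1 hf.
by apply: hn; case: (hu l) => _ [].
Qed.
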